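(* Let $x_0\in\mathbb{R}$. If $\liminf_{n\to\infty}\big(p_n(x_0)^2+p_{n+1}(x_0)^2\big)^{1/n}>1$, then $\displaystyle \frac{p_n(x_0)^2}{K_n(x_0,x_0)}$ does not tend to $0$ as $n\to\infty$.
   Context: Let $\rho$ be a probability measure on $\mathbb{R}$ with compact but infinite support, $p_n$ ($n\ge0$) its orthonormal polynomials (real coefficients, positive leading coefficient, $p_0=1$), and $K_n(x,y)=\sum_{j=0}^n p_j(x)p_j(y)$. *)

(* Defs.v *)
From Stdlib Require Import Reals List.
Open Scope R_scope.

(* Polynomials with real coefficients, as coefficient lists
   [c_0; c_1; ...; c_d]  (c_i is the coefficient of x^i). *)
Fixpoint peval (c : list R) (x : R) : R :=
  match c with
  | nil => 0
  | a :: c' => a + x * peval c' x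
  end.

Fixpoint lsum (n : nat) (f : nat -> R) : R :=
  match n with
  | O => 0
  | S k => lsum k f + f k
  end.

(* The measure rho is represented by its moment sequence m n = int x^n drho.
   The L^2(rho) inner product of two polynomials is then
   <p,q> = sum_{i,j} p_i q_j m(i+j). *)
Definition inner (m : nat -> R) (p q : list R) : R :=
  lsum (length p) (fun i => lsum (length q)
    (fun j => nth i p 0 * nth j q 0 * m (i + j)%nat)).

(* m is the moment sequence of a probability measure on R with compact but
   infinite support:  m 0 = 1 (probability), <c,c> > 0 for every nonzero
   polynomial c (infinite support), and |m n| <= M^n (support in [-M,M]).
   By the Hamburger/Hausdorff moment theorems these are exactly such
   moment sequences. *)
Definition compact_infinite_prob_moments (m : nat -> R) : Prop :=
  m 0%nat = 1 /\
  (forall c : list R, (exists i, nth i c 0 <> 0) -> 0 < inner m c c) /\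
  (exists M : R, 0 <= M /\ forall n, Rabs (m n) <= M ^ n).

Definition orthonormal_polys (m : nat -> R) (P : nat -> list R) : Prop :=
  (forall n, length (P n) = S n /\ 0 < nth n (P n) 0) /\
  (forall i j, inner m (P i) (P j) = if Nat.eqb i j then 1 else 0).

Definition Kern (P : nat -> list R) (n : nat) (x y : R) : R :=
  lsum (S n) (fun j => peval (P j) x * peval (P j) y).

(* liminf_{n->oo} u n > c, written out: some r > c is eventually a lower
   bound of u (this is exactly liminf u > c, in the extended reals). *)
Definition liminf_gt (u : nat -> R) (c : R) : Prop :=
  exists r, c < r /\ exists N, forall n, (N <= n)%nat -> r <= u n.

(* Main.v *)
Require Import Defs.
From Stdlib Require Import Reals List Lra Lia.
Open Scope R_scope.

Lemma lsum_nonneg n f : (forall j, 0 <= f j) -> 0 <= lsum n f.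
Proof. intros H; induction n; simpl; [lra| specialize (H n); lra]. Qed.

Lemma lsum_ge0 n f : (forall j, 0 <= f j) -> f 0%nat <= lsum (S n) f.
Proof. intros H; induction n; simpl in *; [lra| specialize (H (S n)); lra]. Qed.

Lemma rpow_step (s r : R) (n : nat) : (1 <= n)%nat -> 1 < r ->
  r <= Rpower s (/ INR n) -> r ^ n <= s.
Proof.
  intros Hn Hr H.
  destruct (Rlt_dec 0 s) as [Hs|Hs].
  - assert (Hp : 0 < Rpower s (/ INR n)) by (unfold Rpower; apply exp_pos).
    assert (E : Rpower s (/ INR n) ^ n = s).
    { rewrite <- Rpower_pow by exact Hp. rewrite Rpower_mult.
      rewrite Rinv_l. apply Rpower_1; exact Hs.
      apply not_0_INR; lia. }
    rewrite <- E. apply pow_incr; lra.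
  - exfalso. unfold Rpower, ln in H. destruct (Rlt_dec 0 s); [contradiction|].
    rewrite Rmult_0_r, exp_0 in H. lra.
Qed.

Theorem theorem3p2 (m : nat -> R) (P : nat -> list R) (x0 : R) :
  compact_infinite_prob_moments m ->
  orthonormal_polys m P ->
  liminf_gt (fun n => Rpower ((peval (P n) x0) ^ 2 + (peval (P (S n)) x0) ^ 2)
                             (/ INR n)) 1 ->
  ~ Un_cv (fun n => (peval (P n) x0) ^ 2 / Kern P n x0 x0) 0.
Proof.
  intros _ [HP _] [r [Hr [N HN]]] Hcv.
  set (f := fun j => peval (P j) x0 * peval (P j) x0).
  assert (Hf : forall j, 0 <= f j) by (intro j; unfold f; nra).
  assert (Hf0 : 0 < f 0%nat).
  { destruct (HP 0%nat) as [Hl Hc]. unfold f.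
    destruct (P 0%nat) as [|c [|d l]]; simpl in *; try discriminate.
    nra. }
  assert (HK : forall n, Kern P n x0 x0 = lsum (S n) f) by reflexivity.
  assert (HKpos : forall n, 0 < lsum (S n) f).
  { intro n. pose proof (lsum_ge0 n f Hf). lra. }
  set (d := (r - 1) / (2 * r)).
  assert (Hd : 0 < d < 1).
  { unfold d; split; [apply Rdiv_lt_0_compat; lra|].
    apply Rmult_lt_reg_r with (2*r); [lra|]. unfold Rdiv.
    rewrite Rmult_assoc, Rinv_l by lra. lra. }
  destruct (Hcv d (proj1 Hd)) as [N2 HN2].
  assert (Hstep : forall n, (N2 <= S n)%nat ->
     lsum (S (S n)) f * (1 - d) <= lsum (S n) f).
  { intros n Hn. specialize (HN2 (S n) Hn). unfold R_dist in HN2.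
    rewrite Rminus_0_r, HK in HN2. fold f in HN2.
    pose proof (HKpos (S n)) as Hp.
    assert (E : peval (P (S n)) x0 ^ 2 = f (S n)) by (unfold f; ring).
    rewrite E in HN2.
    rewrite Rabs_right in HN2.
    2:{ apply Rle_ge. apply Rmult_le_pos; [apply Hf| left; apply Rinv_0_lt_compat; lra]. }
    assert (f (S n) < d * lsum (S (S n)) f).
    { apply Rmult_lt_reg_r with (/ lsum (S (S n)) f).
      apply Rinv_0_lt_compat; lra.
      rewrite Rmult_assoc, Rinv_r by lra. lra. }
    change (lsum (S (S n)) f) with (lsum (S n) f + f (S n)) in *. nra. }
  set (M := S (Nat.max N N2)).
  assert (Hdec : forall k, lsum (S (M + k)) f * (1 - d) ^ k <= lsum (S M) f).
  { induction k.
    - rewrite Nat.add_0_r; simpl; lra.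
    - replace (M + S k)%nat with (S (M + k)) by lia.
      assert (A := Hstep (M + k)%nat ltac:(unfold M; lia)).
      simpl pow. 
      assert (0 <= (1 - d) ^ k) by (apply pow_le; lra).
      nra. }
  assert (Hgrow : forall k, r ^ (M + k) <= lsum (S (S (M + k))) f).
  { intro k. specialize (HN (M + k)%nat ltac:(unfold M; lia)).
    apply rpow_step in HN; [|unfold M; lia|lra].
    assert (E : lsum (S (S (M+k))) f =
      lsum (M + k) f + f (M+k)%nat + f (S (M+k))) by (unfold M; simpl; ring).
    rewrite E. pose proof (lsum_nonneg (M+k) f Hf).
    assert (E2 : peval (P (M + k)%nat) x0 ^ 2 + peval (P (S (M + k))) x0 ^ 2
       = f (M+k)%nat + f (S (M+k))) by (unfold f; ring).
    rewrite E2 in HN. lra. }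
  set (q := r * (1 - d)).
  assert (Hq : q = (r + 1) / 2).
  { unfold q, d. field. lra. }
  destruct (Pow_x_infinity q ltac:(rewrite Rabs_right; lra) (lsum (S M) f + 1)) as [N3 HN3].
  specialize (HN3 (S N3) ltac:(lia)).
  rewrite Rabs_right in HN3 by (apply Rle_ge, pow_le; lra).
  specialize (Hdec (S N3)). specialize (Hgrow N3).
  replace (S (M + S N3)) with (S (S (M + N3))) in Hdec by lia.
  assert (r ^ S N3 <= r ^ (M + N3)).
  { apply Rle_pow; [lra| unfold M; lia]. }
  assert (0 <= (1 - d) ^ S N3) by (apply pow_le; lra).
  assert (q ^ S N3 = r ^ S N3 * (1 - d) ^ S N3) by (unfold q; apply Rpow_mult_distr).
  nra.
Qed.
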